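(* Let $I$ and $M$ be sets and let $\Phi\colon I\times I\ni(\alpha,\beta)\mapsto\Phi_{\alpha\beta}\in 2^{M\times M}$ be a map (so each $\Phi_{\alpha\beta}$ is a binary relation contained in $M\times M$). Then $\Phi$ satisfies, for all $\alpha,\beta,\gamma\in I$, $$\Phi_{\alpha\beta}\circ\Phi_{\beta\gamma}\subseteq\Phi_{\alpha\gamma},\qquad \Phi_{\alpha\beta}^{-1}\subseteq\Phi_{\beta\alpha},\qquad \Phi_{\alpha\alpha}\subseteq\mathrm{id}_M,$$ if and only if there exists a system $\{\varphi_\alpha\}_{\alpha\in I}$ of binary relations, each of which is an injective co-injection, such that $\Phi_{\alpha\beta}=\varphi_\alpha\circ\varphi_\beta^{-1}$ for all $(\alpha,\beta)\in I\times I$.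
   Context: A binary relation is a set of ordered pairs. For binary relations $\rho,\sigma$: the composition is $\rho\circ\sigma=\{(a,b)\mid \exists c\colon (c,b)\in\rho\ \wedge\ (a,c)\in\sigma\}$; the inverse is $\rho^{-1}=\{(a,b)\mid (b,a)\in\rho\}$; $\mathrm{dom}\,\rho=\{a\mid\exists b\colon (a,b)\in\rho\}$, $\mathrm{rng}\,\rho=\{b\mid \exists a\colon (a,b)\in\rho\}$; $\mathrm{id}_M=\{(x,x)\mid x\in M\}$. A binary relation $\rho$ is called injective (an injection) if $(b_1,a)\in\rho$ and $(b_2,a)\in\rho$ imply $b_1=b_2$; it is called a co-injection if $\rho^{-1}$ is injective, i.e. $(b,a_1)\in\rho$ and $(b,a_2)\in\rho$ imply $a_1=a_2$. An injective co-injection is a relation that is both. *)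

(* Defs.v *)
(* binary relations as Prop-valued predicates.
   A relation between A and B is  rel A B := A -> B -> Prop,
   where  r a b  means  (a,b) ∈ r. *)

Definition rel (A B : Type) : Type := A -> B -> Prop.

Definition rcomp {A C B : Type} (rho : rel C B) (sigma : rel A C) : rel A B :=
  fun a b => exists c, rho c b /\ sigma a c.

Definition rinv {A B : Type} (rho : rel A B) : rel B A := fun a b => rho b a.

Definition rid (M : Type) : rel M M := fun x y => x = y.

Definition rsub {A B : Type} (r s : rel A B) : Prop := forall a b, r a b -> s a b.
Definition req {A B : Type} (r s : rel A B) : Prop := forall a b, r a b <-> s a b.

Definition rinjective {A B : Type} (rho : rel A B) : Prop :=
  forall b1 b2 a, rho b1 a -> rho b2 a -> b1 = b2.

Definition rcoinjective {A B : Type} (rho : rel A B) : Prop := rinjective (rinv rho).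

(* Main.v *)
Require Import Defs.
From Stdlib Require Import FunctionalExtensionality PropExtensionality.

Theorem theorem1 (I M : Type) (Phi : I -> I -> rel M M) :
  ((forall al be ga : I, rsub (rcomp (Phi al be) (Phi be ga)) (Phi al ga)) /\
   (forall al be : I, rsub (rinv (Phi al be)) (Phi be al)) /\
   (forall al : I, rsub (Phi al al) (rid M)))
  <->
  (exists (X : Type) (phi : I -> rel X M),
     (forall al : I, rinjective (phi al) /\ rcoinjective (phi al)) /\
     (forall al be : I, req (Phi al be) (rcomp (phi al) (rinv (phi be))))).
Proof.
  unfold rsub, rcomp, rinv, rid, req, rinjective, rcoinjective, rinv.
  split.
  - intros [Htr [Hinv Hdiag]].
    exists (I -> M -> Prop).
    exists (fun g S m => Phi g g m m /\ forall b n, S b n <-> Phi b g m n).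
    split.
    + intro g. split.
      * intros S1 S2 m [_ H1] [_ H2].
        apply functional_extensionality; intro b.
        apply functional_extensionality; intro n.
        apply propositional_extensionality.
        rewrite H1, H2. tauto.
      * intros m1 m2 S [Hm1 H1] [Hm2 H2].
        assert (S g m1) by (apply H1; exact Hm1).
        apply H2 in H. apply Hdiag in H. symmetry; exact H.
    + intros al be a b. split.
      * intro H.
        exists (fun g n => Phi g be a n).
        assert (Hba : Phi be al b a) by (apply Hinv; exact H).
        split; split.
        -- apply (Htr al be al b b). exists a; split; [exact H|exact Hba].
        -- intros g n. split.
           ++ intro Hg. apply (Htr g be al b n). exists a; split; assumption.
           ++ intro Hg. apply (Htr g al be a n). exists b; split; assumption.
        -- apply (Htr be al be a a). exists b; split; assumption.
        -- intros g n; tauto.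
      * intros [S [[Hb Hs1] [Ha Hs2]]].
        apply Hs2. apply Hs1. exact Hb.
  - intros [X [phi [Hinj Heq]]].
    split; [|split].
    + intros al be ga a c [b [H1 H2]].
      apply Heq in H1. apply Heq in H2. apply Heq.
      destruct H1 as [s [Hs1 Hs2]]. destruct H2 as [t [Ht1 Ht2]].
      destruct (Hinj be) as [Hi _].
      assert (s = t) by (apply (Hi s t b); assumption). subst t.
      exists s. split; assumption.
    + intros al be a b H. apply Heq in H. apply Heq.
      destruct H as [s [H1 H2]]. exists s; split; assumption.
    + intros al a b H. apply Heq in H. destruct H as [s [H1 H2]].
      destruct (Hinj al) as [_ Hc]. exact (Hc a b s H2 H1).
Qed.
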